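(* Let $n,d\ge 1$, let $X\in\mathbb{R}^{d\times n}$ have columns $x_1,\dots,x_n\in\mathbb{R}^d$, let $y=(y_1,\dots,y_n)^T\in\{-1,+1\}^n$, and set $Z=X\,\mathrm{diag}(y)\in\mathbb{R}^{d\times n}$. Let $q>0$, $C>0$, and let $e\in\mathbb{R}^n$ be a vector with all entries positive and $\|e\|_\infty=1$. Define $\theta_q:\mathbb{R}\to\mathbb{R}\cup\{+\infty\}$ by $\theta_q(t)=t^{-q}$ if $t>0$ and $\theta_q(t)=+\infty$ if $t\le 0$. Consider the primal problem $$\min\Big\{\Phi(r,\xi):=\sum_{i=1}^n\theta_q(r_i)+C\langle e,\xi\rangle \;\Big|\; Z^Tw+\beta y+\xi-r=0,\ \|w\|\le 1,\ \xi\ge 0,\ r,\xi\in\mathbb{R}^n,\ w\in\mathbb{R}^d,\ \beta\in\mathbb{R}\Big\}.$$ Let $\kappa=\frac{q+1}{q}\,q^{\frac{1}{q+1}}$. Then the Lagrangian dual of this problem (formed with a multiplier $\alpha\in\mathbb{R}^n$ for the equality constraint, $\eta\in\mathbb{R}^n_{+}$ for $\xi\ge0$, and $\lambda\ge 0$ for the constraint $\tfrac12(\|w\|^2-1)\le 0$) is $$-\min_{\alpha\in\mathbb{R}^n}\Big\{\Psi(\alpha):=\|Z\alpha\|-\kappa\sum_{i=1}^n\alpha_i^{\frac{q}{q+1}}\;\Big|\;0\le\alpha\le Ce,\ \langle y,\alpha\rangle=0\Big\}.$$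
   Context: $\|\cdot\|$ denotes the Euclidean norm and $\langle\cdot,\cdot\rangle$ the standard inner product; vector inequalities are componentwise. *)

(* Defs.v *)
From HB Require Import structures.
From mathcomp Require Import all_boot all_order all_algebra.
From mathcomp Require Import all_classical all_reals all_analysis.
Set Implicit Arguments. Unset Strict Implicit. Unset Printing Implicit Defensive.
Import Order.TTheory GRing.Theory Num.Theory.
Local Open Scope ring_scope.
Local Open Scope classical_set_scope.

Section Defs.
Variable R : realType.

Definition dotv (m : nat) (a b : 'cV[R]_m) : R := \sum_(i < m) a i 0 * b i 0.
Definition normv (m : nat) (a : 'cV[R]_m) : R := Num.sqrt (dotv a a).

Definition theta (q t : R) : \bar R :=
  if 0 < t then (t `^ (- q))%:E else +oo%E.

Definition Zmat (d n : nat) (X : 'M[R]_(d, n)) (y : 'cV[R]_n) : 'M[R]_(d, n) :=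
  X *m diag_mx y^T.

Definition Phi (n : nat) (q C : R) (e r xi : 'cV[R]_n) : \bar R :=
  ((\sum_(i < n) theta q (r i ord0)) + (C * dotv e xi)%:E)%E.

Definition Lagr (d n : nat) (X : 'M[R]_(d, n)) (y : 'cV[R]_n) (q C : R)
  (e : 'cV[R]_n) (r xi : 'cV[R]_n) (w : 'cV[R]_d) (beta : R)
  (alpha eta : 'cV[R]_n) (lam : R) : \bar R :=
  (Phi q C e r xi
   + (dotv alpha (r - (Zmat X y)^T *m w - beta *: y - xi)
      - dotv eta xi
      + lam / 2 * (normv w ^+ 2 - 1))%:E)%E.

Definition dualfun (d n : nat) (X : 'M[R]_(d, n)) (y : 'cV[R]_n) (q C : R)
  (e alpha eta : 'cV[R]_n) (lam : R) : \bar R :=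
  ereal_inf [set v | exists r xi (w : 'cV[R]_d) beta,
                       v = Lagr X y q C e r xi w beta alpha eta lam].

Definition kappa (q : R) : R := (q + 1) / q * q `^ (1 / (q + 1)).

Definition Psi (d n : nat) (X : 'M[R]_(d, n)) (y : 'cV[R]_n) (q : R)
  (alpha : 'cV[R]_n) : R :=
  normv (Zmat X y *m alpha) - kappa q * \sum_(i < n) alpha i 0 `^ (q / (q + 1)).

Definition dual_feasible (n : nat) (y : 'cV[R]_n) (C : R) (e alpha : 'cV[R]_n)
  : Prop :=
  (forall i, 0 <= alpha i 0 /\ alpha i 0 <= C * e i 0) /\ dotv y alpha = 0.

End Defs.

(* Main.v *)
Require Import Defs.
From HB Require Import structures.
From mathcomp Require Import all_boot all_order all_algebra.
From mathcomp Require Import all_classical all_reals all_analysis.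
From mathcomp Require Import ring lra.
Import Order.TTheory GRing.Theory Num.Theory.
Local Open Scope ring_scope.
Local Open Scope classical_set_scope.

Section S.
Variable R : realType.
Implicit Types (q a t : R).

Lemma powRE a x : 0 < a -> a `^ x = expR (x * ln a).
Proof. by move=> a0; rewrite /powR gt_eqF. Qed.

Lemma kappaE q : 0 < q -> kappa q = expR (ln (q+1) - (q/(q+1)) * ln q).
Proof.
move=> q0; have q10 : 0 < q + 1 by lra.
have -> : ln (q+1) - (q/(q+1)) * ln q = ln (q+1) + (- ln q) + 1/(q+1) * ln q.
  by field; lra.
rewrite /kappa powRE // !expRD expRN !lnK ?posrE //.
Qed.
Lemma tangent_expR (k x : R) : expR k * (1 + (x - k)) <= expR x.
Proof.
have -> : expR x = expR k * expR (x - k) by rewrite -expRD; congr expR; ring.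
by rewrite ler_wpM2l ?expR_ge1Dx // ltW // expR_gt0.
Qed.

Lemma scal_lb q a t : 0 < q -> 0 <= a -> 0 < t ->
  kappa q * a `^ (q/(q+1)) <= t `^ (-q) + a * t.
Proof.
move=> q0; rewrite le_eqVlt => /predU1P[<-|a0] t0.
  rewrite powR0 ?mulr0 ?mul0r ?addr0; last by apply/eqP => /(f_equal (fun x => x * (q+1))); rewrite mul0r mulfVK; lra.
  by rewrite ltW // powR_gt0.
have q10 : 0 < q + 1 by lra.
set l1 := ln (q+1); set lq := ln q; set la := ln a; set lt := ln t.
set p := q/(q+1); set s := 1/(q+1).
set k := l1 - p * lq + p * la.
have -> : kappa q * a `^ p = expR k.
  by rewrite kappaE // powRE // -expRD; congr expR; rewrite /k; ring.
have e1 : t `^ (-q) = s * expR (l1 + (- q * lt)).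
  rewrite powRE // expRD lnK ?posrE // /s; field; lra.
have e2 : a * t = p * expR (la + lt + (l1 + - lq)).
  rewrite !expRD expRN !lnK ?posrE // /p; field; lra.
rewrite e1 e2.
apply: (le_trans _ (lerD (ler_wpM2l _ (tangent_expR k _)) (ler_wpM2l _ (tangent_expR k _)))); last 2 first.
- by rewrite /s divr_ge0 //; lra.
- by rewrite /p divr_ge0 //; lra.
rewrite [leRHS](_ : _ = expR k) //.
move: (expR k) => E; rewrite /k /s /p; field; lra.
Qed.
Lemma scal_ub q a eps : 0 < q -> 0 <= a -> 0 < eps ->
  exists t, 0 < t /\ t `^ (-q) + a * t <= kappa q * a `^ (q/(q+1)) + eps.
Proof.
move=> q0; rewrite le_eqVlt => /predU1P[<-|a0] e0.
  exists (expR (- ln eps / q)); split; first exact: expR_gt0.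
  rewrite powRE ?expR_gt0 // expRK powR0 ?mulr0 ?mul0r ?addr0 ?add0r.
    by rewrite (_ : - q * (- ln eps / q) = ln eps) ?lnK ?posrE //; field; lra.
  by apply/eqP => /(f_equal (fun x => x * (q+1))); rewrite mul0r mulfVK; lra.
have q10 : 0 < q + 1 by lra.
set l1 := ln (q+1); set lq := ln q; set la := ln a.
set p := q/(q+1); set s := 1/(q+1).
exists (expR (s * (lq - la))); split; first exact: expR_gt0.
rewrite powRE ?expR_gt0 // expRK kappaE // powRE // -expRD.
have -> : a = expR la by rewrite lnK.
rewrite -expRD.
have -> : - q * (s * (lq - la)) = p * la - p * lq by rewrite /p /s; field; lra.
have -> : la + s * (lq - la) = (p * la - p * lq) + lq by rewrite /p /s; field; lra.
have -> : l1 - q / (q + 1) * lq + p * ln (expR la) = l1 + (p * la - p * lq).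
  by rewrite expRK /p; ring.
rewrite !expRD !lnK ?posrE //; lra.
Qed.

Section Dot.
Variable m : nat.
Implicit Types (u v z : 'cV[R]_m).

Lemma dotvC u v : dotv u v = dotv v u.
Proof. by apply: eq_bigr => i _; rewrite mulrC. Qed.

Lemma dotvDr u v z : dotv u (v + z) = dotv u v + dotv u z.
Proof. by rewrite /dotv -big_split; apply: eq_bigr => i _; rewrite mxE mulrDr. Qed.

Lemma dotvNr u v : dotv u (- v) = - dotv u v.
Proof. by rewrite /dotv -sumrN; apply: eq_bigr => i _; rewrite mxE mulrN. Qed.

Lemma dotvBr u v z : dotv u (v - z) = dotv u v - dotv u z.
Proof. by rewrite dotvDr dotvNr. Qed.

Lemma dotvZr u v (k : R) : dotv u (k *: v) = k * dotv u v.
Proof. by rewrite /dotv mulr_sumr; apply: eq_bigr => i _; rewrite mxE mulrCA. Qed.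

Lemma dotvDl u v z : dotv (v + z) u = dotv v u + dotv z u.
Proof. by rewrite dotvC dotvDr !(dotvC u). Qed.

Lemma dotvBl u v z : dotv (v - z) u = dotv v u - dotv z u.
Proof. by rewrite dotvC dotvBr !(dotvC u). Qed.

Lemma dotvZl u v (k : R) : dotv (k *: v) u = k * dotv v u.
Proof. by rewrite dotvC dotvZr dotvC. Qed.

Lemma dotv0r u : dotv u 0 = 0.
Proof. by rewrite /dotv big1 // => i _; rewrite mxE mulr0. Qed.

Lemma dotv_ge0 u : 0 <= dotv u u.
Proof. by apply: sumr_ge0 => i _; rewrite -expr2 sqr_ge0. Qed.

Lemma normv2 u : normv u ^+ 2 = dotv u u.
Proof. by rewrite /normv sqr_sqrtr // dotv_ge0. Qed.

Lemma normv_ge0 u : 0 <= normv u.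
Proof. exact: sqrtr_ge0. Qed.

Lemma dotv_eq0 u : dotv u u = 0 -> u = 0.
Proof.
move=> h; apply/matrixP => i j; rewrite (ord1 j) mxE.
have := @psumr_eq0P _ _ xpredT (fun i => u i 0 * u i 0) _ h i isT.
by move=> /(_ _)/eqP; rewrite mulf_eq0 orbb => H; apply/eqP; apply: H => k _; rewrite -expr2 sqr_ge0.
Qed.

Lemma cauchy_half u v : dotv u v <= normv u * (dotv v v + 1) / 2.
Proof.
have N2 := normv2 u; have N0 := normv_ge0 u.
move: N0; rewrite le_eqVlt => /predU1P[N0|Np].
  have u0 : u = 0 by apply: dotv_eq0; rewrite -N2 -N0 expr2 mulr0.
  by rewrite -N0 u0 dotvC dotv0r !mul0r.
have := dotv_ge0 (normv u *: v - u).
rewrite !dotvBl !dotvBr !dotvZl !dotvZr -N2 (dotvC u v) => H.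
have vv := dotv_ge0 v.
nra.
Qed.
End Dot.

Lemma dotv_trmx d n (M : 'M[R]_(d, n)) (u : 'cV[R]_n) (w : 'cV[R]_d) :
  dotv u (M^T *m w) = dotv (M *m u) w.
Proof.
rewrite /dotv.
under eq_bigr do rewrite mxE big_distrr /=.
under [RHS]eq_bigr do rewrite mxE big_distrl /=.
rewrite exchange_big /=; apply: eq_bigr => i _; apply: eq_bigr => j _.
by rewrite mxE; ring.
Qed.

Lemma LagrE d n (X : 'M[R]_(d, n)) (y : 'cV[R]_n) (q C : R) (e r xi : 'cV[R]_n)
  (w : 'cV[R]_d) (beta : R) (alpha eta : 'cV[R]_n) (lam : R) :
  (forall i, 0 < r i 0) ->
  Lagr X y q C e r xi w beta alpha eta lam =
  (\sum_(i < n) (r i 0 `^ (- q) + alpha i 0 * r i 0)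
   + dotv (C *: e - alpha - eta) xi - beta * dotv y alpha
   - dotv (Zmat X y *m alpha) w + lam / 2 * (dotv w w - 1))%:E.
Proof.
move=> rpos; rewrite /Lagr /Phi.
have -> : (\sum_(i < n) theta q (r i ord0) = (\sum_(i < n) r i ord0 `^ (- q))%:E)%E.
  rewrite -sumEFin; apply: eq_bigr => i _; by rewrite /theta rpos.
rewrite -!EFinD; congr EFin.
rewrite normv2 !dotvBr dotvZr dotv_trmx !dotvBl dotvZl big_split /= [dotv alpha y]dotvC.
rewrite -/(dotv alpha r).
ring.
Qed.

Lemma le_ninfty_all (x : \bar R) : (forall M : R, (x <= M%:E)%E) -> x = -oo%E.
Proof.
case: x => [r| |] // H.
  by have := H (r - 1)%R; rewrite lee_fin => h; exfalso; lra.
by have := H 0.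
Qed.

Section Main.
Variables (d n : nat) (X : 'M[R]_(d, n)) (y : 'cV[R]_n) (q C : R) (e : 'cV[R]_n).
Hypotheses (hn : (1 <= n)%N) (hq : 0 < q) (hC : 0 < C).

Let Z := Zmat X y.

Lemma K2 alpha : dual_feasible y C e alpha ->
  ((- Psi X y q alpha)%:E <= dualfun X y q C e alpha (C *: e - alpha) (normv (Z *m alpha)))%E.
Proof.
move=> [hab hya]; rewrite /dualfun; apply: le_ereal_inf_tmp => v [r [xi [w [beta ->]]]].
case: (pselect (forall i, 0 < r i 0)) => rpos.
  rewrite LagrE // lee_fin.
  have -> : C *: e - alpha - (C *: e - alpha) = 0 by rewrite subrr.
  rewrite dotvC dotv0r hya mulr0 /Psi.
  have H1 : kappa q * \sum_(i < n) alpha i 0 `^ (q / (q + 1)) <=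
            \sum_(i < n) (r i 0 `^ (- q) + alpha i 0 * r i 0).
    rewrite mulr_sumr; apply: ler_sum => i _; apply: scal_lb => //.
    by case: (hab i).
  have H2 := @cauchy_half d (Z *m alpha) w.
  rewrite -/Z; lra.
move/existsNP: rpos => [i /negP ri].
have hS : (\sum_(j < n | j != i) theta q (r j ord0) != -oo)%E.
  rewrite gt_eqF // (@lt_le_trans _ _ 0%E) //; apply: sume_ge0 => j _.
  by rewrite /theta; case: ifP => _; rewrite ?lee_fin ?powR_ge0 ?leey.
rewrite /Lagr /Phi (bigD1 i) //= /theta (negbTE ri) addye //.
by rewrite addye ?addye ?leey.
Qed.

Lemma K1 alpha eta lam : dual_feasible y C e alpha -> 0 <= lam ->
  (dualfun X y q C e alpha eta lam <= (- Psi X y q alpha)%:E)%E.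
Proof.
move=> [hab hya] hlam; apply/lee_addgt0Pr => eps e0.
have n0 : (0 < n%:R :> R) by rewrite ltr0n.
have : forall i : 'I_n, exists t, 0 < t /\
    t `^ (-q) + alpha i 0 * t <= kappa q * alpha i 0 `^ (q/(q+1)) + eps / n%:R.
  move=> i; apply: scal_ub => //; first by case: (hab i).
  by rewrite divr_gt0.
move/fin_all_exists => [f hf].
set N := normv (Z *m alpha).
set w := N^-1 *: (Z *m alpha).
apply: (le_trans (ereal_inf_lbound _)).
  by exists (\col_i f i), 0, w, 0.
rewrite LagrE; last by move=> i; rewrite mxE; case: (hf i).
rewrite -EFinD lee_fin dotv0r mul0r /Psi -/Z.
have H1 : \sum_(i < n) ((\col_i f i) i 0 `^ (- q) + alpha i 0 * (\col_i f i) i 0)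
   <= kappa q * \sum_(i < n) alpha i 0 `^ (q / (q + 1)) + eps.
  apply: (@le_trans _ _ (\sum_(i < n) (kappa q * alpha i 0 `^ (q/(q+1)) + eps / n%:R))).
    by apply: ler_sum => i _; rewrite !mxE; case: (hf i).
  rewrite big_split /= -mulr_sumr sumr_const card_ord -[_ *+ n]mulr_natr divfK //.
  by rewrite gt_eqF.
have N0 := @normv_ge0 d (Z *m alpha).
have N2 := @normv2 d (Z *m alpha).
have H2 : dotv (Z *m alpha) w = N.
  rewrite /w dotvZr -N2 -/N; have [->|Nn] := eqVneq N 0; first by rewrite invr0 mul0r.
  by field.
have H3 : dotv w w <= 1.
  rewrite /w dotvZl dotvZr -N2 -/N; have [->|Nn] := eqVneq N 0; first by rewrite invr0 !mul0r.
  by rewrite [X in X <= _](_ : _ = 1) //; field.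
rewrite H2.
have : lam / 2 * (dotv w w - 1) <= 0 by apply: mulr_ge0_le0; lra.
rewrite -/N; lra.
Qed.

Lemma K3 (alpha eta : 'cV[R]_n) (lam : R) : ~ dual_feasible y C e alpha ->
  (forall i, 0 <= eta i 0) -> 0 <= lam ->
  dualfun X y q C e alpha eta lam = -oo%E.
Proof.
move=> nf heta hlam; apply: le_ninfty_all => M.
set one : 'cV[R]_n := const_mx 1.
have one_pos : forall i, 0 < one i 0 by move=> i; rewrite mxE.
set B := \sum_(i < n) (one i 0 `^ (- q) + alpha i 0 * one i 0).
have base : forall xi beta,
   (dualfun X y q C e alpha eta lam <=
    (B + dotv (C *: e - alpha - eta) xi - beta * dotv y alpha - lam / 2)%:E)%E.
  move=> xi beta; apply: (le_trans (ereal_inf_lbound _)).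
    by exists one, xi, 0, beta.
  rewrite LagrE // lee_fin dotv0r dotv0r -/B; lra.
case: (pselect (dotv y alpha = 0)) => hya; last first.
  apply: (le_trans (base 0 (`|B - M| / dotv y alpha))).
  rewrite lee_fin dotv0r divfK; last by apply/eqP.
  have := ler_norm (B - M); lra.
have [i hi] : exists i, ~ (0 <= alpha i 0 /\ alpha i 0 <= C * e i 0).
  apply: contra_notP nf => H; split => // i.
  by apply: (contra_notP _ H) => h; exists i.
case: (pselect (0 <= alpha i 0)) => ha0.
  have hg : (C *: e - alpha - eta) i 0 < 0.
    rewrite !mxE; have := heta i.
    have : ~ alpha i 0 <= C * e i 0 by move=> h; apply: hi.
    move/negP; rewrite -ltNge; lra.
  set g := C *: e - alpha - eta.
  have gg : 0 < dotv g g.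
    rewrite lt_def dotv_ge0 andbT; apply/eqP => /dotv_eq0 g0.
    by move: hg; rewrite -/g g0 mxE ltxx.
  apply: (le_trans (base ((- `|B - M| / dotv g g) *: g) 0)).
  rewrite lee_fin dotvZr divfK ?gt_eqF // mul0r.
  have := ler_norm (B - M); lra.
have an : alpha i 0 < 0 by rewrite ltNge; apply/negP.
set B' := \sum_(j < n | j != i) (1 + alpha j 0).
set T := 1 + `|1 + B' - M| / (- alpha i 0).
have T1 : 1 <= T.
  by rewrite /T lerDl divr_ge0 // ?normr_ge0 //; lra.
set r : 'cV[R]_n := \col_j (if j == i then T else 1).
have rpos : forall j, 0 < r j 0 by move=> j; rewrite mxE; case: ifP => _; lra.
apply: (le_trans (ereal_inf_lbound _)).
  by exists r, 0, 0, 0.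
rewrite LagrE // lee_fin !dotv0r !mul0r (bigD1 i) //=.
have -> : \sum_(j < n | j != i) (r j 0 `^ (- q) + alpha j 0 * r j 0) = B'.
  by apply: eq_bigr => j /negbTE ji; rewrite mxE ji powR1 mulr1.
rewrite mxE eqxx.
have Tq : T `^ (- q) <= 1.
  rewrite -(powRr0 T); apply: ler_powR; [exact: T1 | by rewrite oppr_le0 ltW].
have hT : alpha i 0 * T = alpha i 0 - `|1 + B' - M|.
  by rewrite /T; field; lra.
have := ler_norm (1 + B' - M).
lra.
Qed.
End Main.
End S.

Theorem proposition1 (R : realType) (n d : nat) (hn : (1 <= n)%N) (hd : (1 <= d)%N)
  (X : 'M[R]_(d, n)) (y : 'cV[R]_n) (hy : forall i, y i 0 = 1 \/ y i 0 = -1)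
  (q C : R) (hq : 0 < q) (hC : 0 < C)
  (e : 'cV[R]_n) (he : forall i, 0 < e i 0)
  (he1 : (\big[Num.max/0]_(i < n) `|e i 0|) = 1) :
  (forall alpha : 'cV[R]_n,
     ereal_sup [set v | exists (eta : 'cV[R]_n) (lam : R),
                  (forall i, 0 <= eta i 0) /\ 0 <= lam /\
                  v = dualfun X y q C e alpha eta lam]
     = (if `[< dual_feasible y C e alpha >] then (- Psi X y q alpha)%:E
        else -oo)%E)
  /\
  ereal_sup [set v | exists (alpha eta : 'cV[R]_n) (lam : R),
               (forall i, 0 <= eta i 0) /\ 0 <= lam /\
               v = dualfun X y q C e alpha eta lam]
  = (- ereal_inf [set (Psi X y q alpha)%:E | alpha in dual_feasible y C e])%E.
Proof.
have wit : forall alpha, dual_feasible y C e alpha ->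
    (forall i, 0 <= (C *: e - alpha) i 0) /\ 0 <= normv (Zmat X y *m alpha).
  move=> alpha [hab _]; split; last exact: normv_ge0.
  by move=> i; rewrite !mxE subr_ge0; case: (hab i).
split.
  move=> alpha; case: (pselect (dual_feasible y C e alpha)) => hf.
    rewrite asboolT //; apply/eqP; rewrite eq_le; apply/andP; split.
      apply: ge_ereal_sup => v [eta [lam [he0 [hl ->]]]].
      exact: (@K1 _ _ _ X y q C e hn hq).
    apply: (le_trans (@K2 _ _ _ X y q C e hq _ hf)); apply: ereal_sup_ubound.
    have [w1 w2] := wit _ hf.
    by exists (C *: e - alpha), (normv (Zmat X y *m alpha)).
  rewrite asboolF //; apply/eqP; rewrite -leeNy_eq.
  apply: ge_ereal_sup => v [eta [lam [he0 [hl ->]]]].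
  by rewrite (@K3 _ _ _ X y q C e hq).
apply/eqP; rewrite eq_le; apply/andP; split.
  apply: ge_ereal_sup => v [alpha [eta [lam [he0 [hl ->]]]]].
  case: (pselect (dual_feasible y C e alpha)) => hf; last first.
    by rewrite (@K3 _ _ _ X y q C e hq) // leNye.
  apply: (le_trans (@K1 _ _ _ X y q C e hn hq _ _ _ hf hl)).
  rewrite EFinN leeN2; apply: ereal_inf_lbound; by exists alpha.
rewrite leeNl; apply: le_ereal_inf_tmp => p [alpha hf <-].
rewrite leeNl -EFinN.
apply: (le_trans (@K2 _ _ _ X y q C e hq _ hf)); apply: ereal_sup_ubound.
have [w1 w2] := wit _ hf.
by exists alpha, (C *: e - alpha), (normv (Zmat X y *m alpha)).
Qed.
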